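(* An ordered GIFS $(\mathcal A,\Gamma,(g_\gamma)_{\gamma\in\Gamma},\prec)$ is a linear GIFS if and only if it satisfies the chain condition.
   Context: A graph-directed iterated function system (GIFS) consists of a finite directed graph $(\mathcal A,\Gamma)$ with vertex set $\mathcal A=\{1,\dots,N\}$ and finite edge set $\Gamma$ (loops and multiple edges allowed), in which every vertex has at least one outgoing edge, together with contracting similitudes $g_\gamma:\mathbb R^d\to\mathbb R^d$, $\gamma\in\Gamma$. Let $\Gamma_{ij}$ be the set of edges from $i$ to $j$ and $\Gamma_i$ the set of edges starting at $i$; $t(\gamma)$ is the terminal vertex of an edge or path $\gamma$. The invariant sets are the unique nonempty compact sets $E_1,\dots,E_N$ with $E_i=\bigcup_{j}\bigcup_{\gamma\in\Gamma_{ij}}g_\gamma(E_j)$. A path is a sequence of edges $\omega_1\omega_2\cdots$ such that the terminal vertex of $\omega_m$ is the initial vertex of $\omega_{m+1}$; $\Gamma_i^k$ (resp. $\Gamma_i^\infty$) denotes the set of paths of length $k$ (resp. infinite paths) starting at $i$, and $\omega|_n$ is the prefix of length $n$. For a finite path $\gamma=\gamma_1\dots\gamma_n$, put $g_\gamma=g_{\gamma_1}\circ\cdots\circ g_{\gamma_n}$ and $E_\gamma=g_\gamma(E_{t(\gamma)})$. The projection $\pi_i:\Gamma_i^\infty\to E_i$ is given by $\{\pi_i(\omega)\}=\bigcap_{n\ge1}E_{\omega|_n}$. An ordered GIFS is a GIFS together with a partial order $\prec$ on $\Gamma$ whose restriction to each $\Gamma_i$ is a linear order, and such that edges in $\Gamma_i$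 and $\Gamma_j$ are incomparable for $i\neq j$. It induces the dictionary order on each $\Gamma_i^k$: $\gamma_1\dots\gamma_k\prec\omega_1\dots\omega_k$ iff for some $\ell$, $\gamma_1\dots\gamma_{\ell-1}=\omega_1\dots\omega_{\ell-1}$ and $\gamma_\ell\prec\omega_\ell$. Two paths of $\Gamma_i^k$ (or two edges of $\Gamma_i$) are adjacent if they are consecutive in this linear order. The ordered GIFS is a linear GIFS if $E_\gamma\cap E_\omega\neq\emptyset$ for all $i$, $k\ge1$ and all adjacent $\gamma,\omega\in\Gamma_i^k$. The lowest path of $\Gamma_i^\infty$ is the infinite path $\omega\in\Gamma_i^\infty$ such that $\omega|_n$ is the smallest element of $\Gamma_i^n$ for every $n$; its image $\pi_i(\omega)$ is the head of $E_i$. Similarly the highest path $\omega'$ has $\omega'|_n$ the largest element of $\Gamma_i^n$ for all $n$, and $\pi_i(\omega')$ is the tail of $E_i$. The ordered GIFS satisfies the chain condition if for every $i\in\mathcal A$ and every two adjacent edges $\omega,\gamma\in\Gamma_i$ with $\omega\prec\gamma$, $g_\omega(\text{tail of }E_{t(\omega)})=g_\gamma(\text{head of }E_{t(\gamma)})$. *)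

(* Defs.v *)
From Stdlib Require Import Reals List Arith.
Import ListNotations.
Open Scope R_scope.
Set Implicit Arguments.

(** Points of R^d: real sequences vanishing from index d on. *)
Definition pt (d : nat) := {x : nat -> R | forall i, (d <= i)%nat -> x i = 0}.

Definition coord (d : nat) (x : pt d) (i : nat) : R := proj1_sig x i.

Definition dist (d : nat) (x y : pt d) : R :=
  sqrt (fold_right Rplus 0 (map (fun i => Rsqr (coord x i - coord y i)) (seq 0 d))).

Definition contracting_similitude (d : nat) (f : pt d -> pt d) : Prop :=
  exists r, 0 < r < 1 /\ forall x y, dist (f x) (f y) = r * dist x y.

Definition compact (d : nat) (K : pt d -> Prop) : Prop :=
  forall u : nat -> pt d, (forall n, K (u n)) ->
  exists phi : nat -> nat, (forall n, (phi n < phi (S n))%nat) /\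
  exists x, K x /\
  forall eps, eps > 0 -> exists N, forall n, (N <= n)%nat -> dist (u (phi n)) x < eps.

(** A graph-directed system: vertices 0..nV-1, edges 0..nE-1,
    edge e goes from [src e] to [tgt e] and carries the map [gmap e]. *)
Record GIFS (d : nat) : Type := mkGIFS {
  nV : nat;
  nE : nat;
  src : nat -> nat;
  tgt : nat -> nat;
  gmap : nat -> pt d -> pt d
}.

Definition is_GIFS (d : nat) (G : GIFS d) : Prop :=
  (forall e, (e < nE G)%nat -> (src G e < nV G)%nat /\ (tgt G e < nV G)%nat) /\
  (forall i, (i < nV G)%nat -> exists e, (e < nE G)%nat /\ src G e = i) /\
  (forall e, (e < nE G)%nat -> contracting_similitude (gmap G e)).

Definition is_ordered (d : nat) (G : GIFS d) (lt : nat -> nat -> Prop) : Prop :=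
  (forall e f, lt e f -> (e < nE G)%nat /\ (f < nE G)%nat) /\
  (forall e, ~ lt e e) /\
  (forall e f h, lt e f -> lt f h -> lt e h) /\
  (forall e f, (e < nE G)%nat -> (f < nE G)%nat -> src G e = src G f ->
     lt e f \/ e = f \/ lt f e) /\
  (forall e f, src G e <> src G f -> ~ lt e f).

Fixpoint fpath (d : nat) (G : GIFS d) (i : nat) (p : list nat) : Prop :=
  match p with
  | [] => True
  | e :: q => (e < nE G)%nat /\ src G e = i /\ fpath G (tgt G e) q
  end.

Definition paths (d : nat) (G : GIFS d) (i k : nat) (p : list nat) : Prop :=
  fpath G i p /\ length p = k.

Fixpoint term (d : nat) (G : GIFS d) (i : nat) (p : list nat) : nat :=
  match p with
  | [] => i
  | e :: q => term G (tgt G e) q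
  end.

Definition gpath (d : nat) (G : GIFS d) (p : list nat) (x : pt d) : pt d :=
  fold_right (fun e y => gmap G e y) x p.

Definition cyl (d : nat) (G : GIFS d) (E : nat -> pt d -> Prop)
  (i : nat) (p : list nat) (x : pt d) : Prop :=
  exists y, E (term G i p) y /\ x = gpath G p y.

Definition invariant_sets (d : nat) (G : GIFS d) (E : nat -> pt d -> Prop) : Prop :=
  forall i, (i < nV G)%nat ->
    (exists x, E i x) /\ compact (E i) /\
    forall x, E i x <-> exists e, (e < nE G)%nat /\ src G e = i /\
                          exists y, E (tgt G e) y /\ x = gmap G e y.

Definition lex (lt : nat -> nat -> Prop) (p q : list nat) : Prop :=
  exists u a b v w, p = u ++ a :: v /\ q = u ++ b :: w /\ lt a b.

Definition adjacent_paths (d : nat) (G : GIFS d) (lt : nat -> nat -> Prop)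
  (i k : nat) (p q : list nat) : Prop :=
  paths G i k p /\ paths G i k q /\ lex lt p q /\
  ~ (exists r, paths G i k r /\ lex lt p r /\ lex lt r q).

Definition linear_GIFS (d : nat) (G : GIFS d) (lt : nat -> nat -> Prop)
  (E : nat -> pt d -> Prop) : Prop :=
  forall i k p q, (i < nV G)%nat -> (1 <= k)%nat -> adjacent_paths G lt i k p q ->
    exists x, cyl G E i p x /\ cyl G E i q x.

Definition prefix (w : nat -> nat) (n : nat) : list nat := map w (seq 0 n).

Definition ipath (d : nat) (G : GIFS d) (i : nat) (w : nat -> nat) : Prop :=
  forall n, fpath G i (prefix w n).

Definition lowest_path (d : nat) (G : GIFS d) (lt : nat -> nat -> Prop)
  (i : nat) (w : nat -> nat) : Prop :=
  ipath G i w /\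
  forall n q, (1 <= n)%nat -> paths G i n q -> q = prefix w n \/ lex lt (prefix w n) q.

Definition highest_path (d : nat) (G : GIFS d) (lt : nat -> nat -> Prop)
  (i : nat) (w : nat -> nat) : Prop :=
  ipath G i w /\
  forall n q, (1 <= n)%nat -> paths G i n q -> q = prefix w n \/ lex lt q (prefix w n).

Definition proj_point (d : nat) (G : GIFS d) (E : nat -> pt d -> Prop)
  (i : nat) (w : nat -> nat) (x : pt d) : Prop :=
  forall n, (1 <= n)%nat -> cyl G E i (prefix w n) x.

Definition is_head (d : nat) (G : GIFS d) (lt : nat -> nat -> Prop)
  (E : nat -> pt d -> Prop) (i : nat) (x : pt d) : Prop :=
  exists w, lowest_path G lt i w /\ proj_point G E i w x.

Definition is_tail (d : nat) (G : GIFS d) (lt : nat -> nat -> Prop)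
  (E : nat -> pt d -> Prop) (i : nat) (x : pt d) : Prop :=
  exists w, highest_path G lt i w /\ proj_point G E i w x.

Definition adjacent_edges (d : nat) (G : GIFS d) (lt : nat -> nat -> Prop)
  (i e f : nat) : Prop :=
  (e < nE G)%nat /\ (f < nE G)%nat /\ src G e = i /\ src G f = i /\ lt e f /\
  ~ (exists h, (h < nE G)%nat /\ src G h = i /\ lt e h /\ lt h f).

Definition chain_condition (d : nat) (G : GIFS d) (lt : nat -> nat -> Prop)
  (E : nat -> pt d -> Prop) : Prop :=
  forall i e f, (i < nV G)%nat -> adjacent_edges G lt i e f ->
    forall x y, is_tail G lt E (tgt G e) x -> is_head G lt E (tgt G f) y ->
      gmap G e x = gmap G f y.

(* Main.v *)
Require Import Defs.
From Stdlib Require Import Reals List Arith Lra Lia Classical ClassicalEpsilon FunctionalExtensionality ProofIrrelevance.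
Import ListNotations.
Open Scope R_scope.
Set Implicit Arguments.
Local Notation dist := Defs.dist.
Local Notation compact := Defs.compact.

Lemma choice_fun {A B : Type} (P : A -> B -> Prop) :
  (forall a, exists b, P a b) -> exists f, forall a, P a (f a).
Proof.
  intros H. exists (fun a => proj1_sig (constructive_indefinite_description _ (H a))).
  intros a. exact (proj2_sig (constructive_indefinite_description _ (H a))).
Qed.

Lemma dist_nonneg d (a b : pt d) : 0 <= dist a b.
Proof. unfold dist. apply sqrt_pos. Qed.

Lemma fold_nonneg (f : nat -> R) l :
  (forall j, 0 <= f j) -> 0 <= fold_right Rplus 0 (map f l).
Proof. intros H; induction l; simpl; [lra| specialize (H a); lra]. Qed.

Lemma fold_ge_elem (f : nat -> R) l i :
  (forall j, 0 <= f j) -> In i l -> f i <= fold_right Rplus 0 (map f l).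
Proof.
  intros H; induction l as [|a l IH]; simpl; intros Hi; [contradiction|].
  destruct Hi as [<-|Hi].
  - pose proof (fold_nonneg f l H); lra.
  - specialize (IH Hi); specialize (H a); lra.
Qed.

Lemma fold_le_const (f : nat -> R) l c :
  (forall j, In j l -> f j <= c) -> fold_right Rplus 0 (map f l) <= INR (length l) * c.
Proof.
  induction l as [|a l IH]; intros H. simpl; lra.
  change (length (a :: l)) with (S (length l)). rewrite S_INR, Rmult_plus_distr_r.
  change (fold_right Rplus 0 (map f (a :: l))) with (f a + fold_right Rplus 0 (map f l)).
  assert (f a <= c) by (apply H; left; reflexivity).
  assert (fold_right Rplus 0 (map f l) <= INR (length l) * c) by (apply IH; intros; apply H; right; assumption).
  lra.
Qed.

Lemma coord_le_dist d (a b : pt d) i :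
  (i < d)%nat -> Rabs (coord a i - coord b i) <= dist a b.
Proof.
  intros Hi. unfold dist. rewrite <- sqrt_Rsqr_abs. apply sqrt_le_1_alt.
  apply (fold_ge_elem (fun i => Rsqr (coord a i - coord b i))).
  - intros; apply Rle_0_sqr.
  - apply in_seq; lia.
Qed.

Lemma pt_eq d (a b : pt d) :
  (forall i, (i < d)%nat -> coord a i = coord b i) -> a = b.
Proof.
  destruct a as [fa Ha], b as [fb Hb]; unfold coord; simpl; intros H.
  assert (fa = fb).
  { apply functional_extensionality; intros i. destruct (lt_dec i d). auto.
    rewrite Ha, Hb; auto; lia. }
  subst fb. f_equal. apply proof_irrelevance.
Qed.

Lemma zero_small t : (forall eps, eps > 0 -> Rabs t < eps) -> t = 0.
Proof.
  intros H. destruct (Req_dec t 0) as [|Hn]; auto.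
  pose proof (Rabs_pos_lt t Hn). specialize (H (Rabs t) H0). lra.
Qed.

Lemma abs_tri3 a b c : Rabs (a - b) <= Rabs (c - a) + Rabs (c - b).
Proof.
  replace (a - b) with (- (c - a) + (c - b)) by ring.
  eapply Rle_trans. apply Rabs_triang. rewrite Rabs_Ropp. lra.
Qed.

Lemma pow_01 r n : 0 <= r <= 1 -> 0 <= r ^ n <= 1.
Proof. intros H; induction n; simpl; nra. Qed.

Lemma phi_ge (phi : nat -> nat) : (forall n, (phi n < phi (S n))%nat) -> forall n, (n <= phi n)%nat.
Proof. intros H n; induction n. lia. specialize (H n); lia. Qed.

Lemma compact_coord_bound d (K : pt d -> Prop) i : compact K -> (i < d)%nat ->
  exists B, forall a, K a -> Rabs (coord a i) <= B.
Proof.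
  intros HK Hi. apply NNPP; intro H.
  assert (Hu : forall n : nat, exists a, K a /\ INR n < Rabs (coord a i)).
  { intro n. apply NNPP; intro H2. apply H. exists (INR n). intros a Ka.
    apply Rnot_lt_le. intro. apply H2; eauto. }
  apply choice_fun in Hu. destruct Hu as [u Hu].
  destruct (HK u) as [phi [Hphi [x [Kx Hc]]]]. { intro n; apply Hu. }
  destruct (Hc 1) as [N HN]. lra.
  destruct (INR_archimed 1 (Rabs (coord x i) + 1)) as [n0 Hn0]. lra.
  set (n := Nat.max N n0).
  specialize (HN n ltac:(lia)).
  pose proof (phi_ge phi Hphi n) as Hge.
  assert (INR n0 <= INR (phi n)) by (apply le_INR; lia).
  destruct (Hu (phi n)) as [_ Hb].
  pose proof (coord_le_dist (u (phi n)) x Hi).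
  pose proof (abs_tri3 (coord (u (phi n)) i) 0 (coord x i)) as H3.
  rewrite !Rminus_0_r in H3.
  assert (Rabs (coord x i - coord (u (phi n)) i) = Rabs (coord (u (phi n)) i - coord x i)) by apply Rabs_minus_sym.
  lra.
Qed.

Lemma compact_bound d (K : pt d -> Prop) : compact K ->
  exists B, forall a, K a -> forall i, (i < d)%nat -> Rabs (coord a i) <= B.
Proof.
  intros HK.
  assert (forall N, (N <= d)%nat -> exists B, forall a, K a -> forall i, (i < N)%nat -> Rabs (coord a i) <= B).
  { induction N; intros HN.
    - exists 0; intros; lia.
    - destruct IHN as [B HB]; [lia|].
      destruct (compact_coord_bound HK (i:=N)) as [B' HB']; [lia|].
      exists (Rmax B B'). intros a Ka i Hi.
      destruct (Nat.eq_dec i N) as [->|Hne].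
      + eapply Rle_trans; [apply HB'; auto| apply Rmax_r].
      + eapply Rle_trans; [apply HB; auto; lia| apply Rmax_l]. }
  apply H; lia.
Qed.

Lemma compact_dist_bound d (K : pt d -> Prop) : compact K ->
  exists M, forall a b, K a -> K b -> dist a b <= M.
Proof.
  intros HK. destruct (compact_bound HK) as [B HB].
  exists (sqrt (INR d * Rsqr (B + B))). intros a b Ka Kb.
  unfold dist. apply sqrt_le_1_alt.
  replace d with (length (seq 0 d)) at 2 by apply length_seq.
  apply fold_le_const. intros j Hj. apply in_seq in Hj.
  pose proof (HB a Ka j ltac:(lia)). pose proof (HB b Kb j ltac:(lia)).
  pose proof (abs_tri3 (coord a j) (coord b j) 0) as H1.
  rewrite Rminus_0_l, Rabs_Ropp, Rminus_0_l, Rabs_Ropp in H1.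
  rewrite Rsqr_abs. unfold Rsqr.
  pose proof (Rabs_pos (coord a j - coord b j)). nra.
Qed.


Lemma fpath_app d (G : GIFS d) p q i :
  fpath G i (p ++ q) <-> fpath G i p /\ fpath G (term G i p) q.
Proof.
  revert i; induction p as [|e p IH]; intros i; simpl.
  - tauto.
  - rewrite IH. tauto.
Qed.

Lemma term_app d (G : GIFS d) p q i : term G i (p ++ q) = term G (term G i p) q.
Proof. revert i; induction p; intros i; simpl; auto. Qed.

Lemma gpath_app d (G : GIFS d) p q x : gpath G (p ++ q) x = gpath G p (gpath G q x).
Proof. unfold gpath. apply fold_right_app. Qed.

Lemma term_lt d (G : GIFS d) p i : is_GIFS G -> (i < nV G)%nat -> fpath G i p -> (term G i p < nV G)%nat.
Proof.
  intros [HG _]. revert i; induction p as [|e p IH]; intros i Hi Hp; simpl in *; auto.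
  destruct Hp as [He [_ Hp]]. apply IH; auto. apply HG; auto.
Qed.

Lemma fpath_edges d (G : GIFS d) p i : fpath G i p -> forall e, In e p -> (e < nE G)%nat.
Proof.
  revert i; induction p as [|e p IH]; intros i Hp f Hf; simpl in *. contradiction.
  destruct Hp as [He [_ Hp]]. destruct Hf as [<-|Hf]; eauto.
Qed.

Lemma path_exists d (G : GIFS d) : is_GIFS G -> forall m c, (c < nV G)%nat ->
  exists p, fpath G c p /\ length p = m.
Proof.
  intros [HG1 [HG2 _]]. induction m; intros c Hc.
  - exists []; simpl; auto.
  - destruct (HG2 c Hc) as [e [He Hs]].
    destruct (IHm (tgt G e)) as [p [Hp Hl]]. apply HG1; auto.
    exists (e :: p); simpl; auto.
Qed.

Lemma cyl_in_E d (G : GIFS d) E : is_GIFS G -> invariant_sets G E ->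
  forall p c x, (c < nV G)%nat -> fpath G c p -> cyl G E c p x -> E c x.
Proof.
  intros HG HE. induction p as [|e p IH]; intros c x Hc Hp [y [Hy ->]]; simpl in *.
  - exact Hy.
  - destruct Hp as [He [Hs Hp]].
    assert (Htc : (tgt G e < nV G)%nat) by (apply (proj1 HG); auto).
    assert (E (tgt G e) (gpath G p y)) by (apply (IH _ _ Htc Hp); exists y; auto).
    apply (proj2 (proj2 (HE c Hc))). exists e; repeat split; auto.
    exists (gpath G p y); split; auto.
Qed.

Lemma rmax_ex d (G : GIFS d) : is_GIFS G -> exists r, 0 <= r < 1 /\
  forall e a b, (e < nE G)%nat -> dist (gmap G e a) (gmap G e b) <= r * dist a b.
Proof.
  intros [_ [_ HG]].
  assert (forall N, (N <= nE G)%nat -> exists r, 0 <= r < 1 /\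
    forall e a b, (e < N)%nat -> dist (gmap G e a) (gmap G e b) <= r * dist a b).
  { induction N; intros HN.
    - exists 0; split; [lra|]. intros; lia.
    - destruct IHN as [r [Hr Hb]]; [lia|].
      destruct (HG N ltac:(lia)) as [rN [HrN HbN]].
      exists (Rmax r rN). split.
      + split. eapply Rle_trans; [apply Hr|apply Rmax_l]. apply Rmax_lub_lt; lra.
      + intros e a b He. pose proof (dist_nonneg a b).
        destruct (Nat.eq_dec e N) as [->|Hne].
        * rewrite HbN. apply Rmult_le_compat_r; auto. apply Rmax_r.
        * eapply Rle_trans. apply Hb; lia. apply Rmult_le_compat_r; auto. apply Rmax_l. }
  apply H; lia.
Qed.

Lemma gpath_lip d (G : GIFS d) r : 0 <= r ->
  (forall e a b, (e < nE G)%nat -> dist (gmap G e a) (gmap G e b) <= r * dist a b) ->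
  forall p a b, (forall e, In e p -> (e < nE G)%nat) ->
  dist (gpath G p a) (gpath G p b) <= r ^ length p * dist a b.
Proof.
  intros Hr Hg. induction p as [|e p IH]; intros a b Hp.
  - simpl. unfold gpath; simpl. lra.
  - change (gpath G (e :: p) a) with (gmap G e (gpath G p a)).
    change (gpath G (e :: p) b) with (gmap G e (gpath G p b)).
    change (length (e :: p)) with (S (length p)). rewrite <- tech_pow_Rmult.
    eapply Rle_trans. apply Hg. apply Hp; left; auto.
    rewrite Rmult_assoc. apply Rmult_le_compat_l; auto.
    apply IH. intros; apply Hp; right; auto.
Qed.

Lemma uniform_bound d (G : GIFS d) E : invariant_sets G E ->
  exists M, forall j a b, (j < nV G)%nat -> E j a -> E j b -> dist a b <= M.
Proof.
  intros HE.
  assert (forall N, (N <= nV G)%nat -> exists M, forall j a b, (j < N)%nat -> E j a -> E j b -> dist a b <= M).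
  { induction N; intros HN.
    - exists 0; intros; lia.
    - destruct IHN as [M HM]; [lia|].
      destruct (compact_dist_bound (proj1 (proj2 (HE N ltac:(lia))))) as [M' HM'].
      exists (Rmax M M'). intros j a b Hj Ha Hb.
      destruct (Nat.eq_dec j N) as [->|Hne].
      + eapply Rle_trans; [apply HM'; auto| apply Rmax_r].
      + eapply Rle_trans; [apply (HM j); auto; lia| apply Rmax_l]. }
  apply H; lia.
Qed.

Lemma lex_cons_inv (lt : nat -> nat -> Prop) e v h r :
  lex lt (e :: v) (h :: r) -> lt e h \/ (e = h /\ lex lt v r).
Proof.
  intros [u [a [b [v' [w' [H1 [H2 H3]]]]]]].
  destruct u as [|c u]; simpl in *.
  - inversion H1; inversion H2; subst; auto.
  - inversion H1; inversion H2; subst. right; split; auto.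
    exists u, a, b, v', w'; auto.
Qed.

Lemma lex_nil_r (lt : nat -> nat -> Prop) p : ~ lex lt p [].
Proof. intros [u [a [b [v [w [_ [H _]]]]]]]. destruct u; discriminate. Qed.
Lemma lex_nil_l (lt : nat -> nat -> Prop) p : ~ lex lt [] p.
Proof. intros [u [a [b [v [w [H _]]]]]]. destruct u; discriminate. Qed.

Lemma lex_here (lt : nat -> nat -> Prop) e h v r : lt e h -> lex lt (e :: v) (h :: r).
Proof. intros H. exists [], e, h, v, r; auto. Qed.

Lemma lex_app (lt : nat -> nat -> Prop) u v r : lex lt v r -> lex lt (u ++ v) (u ++ r).
Proof.
  intros [u' [a [b [v' [w' [-> [-> H]]]]]]].
  exists (u ++ u'), a, b, v', w'. rewrite <- !app_assoc. auto.
Qed.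

Lemma lex_asym (lt : nat -> nat -> Prop) :
  (forall e, ~ lt e e) -> (forall e f h, lt e f -> lt f h -> lt e h) ->
  forall p q, lex lt p q -> lex lt q p -> False.
Proof.
  intros Hirr Htr. induction p as [|e p IH]; intros q H1 H2.
  - eapply lex_nil_l; eauto.
  - destruct q as [|h q]. eapply lex_nil_r; eauto.
    apply lex_cons_inv in H1. apply lex_cons_inv in H2.
    destruct H1 as [H1|[<- H1]]; destruct H2 as [H2|[He H2]].
    + apply (Hirr e). eauto.
    + subst; eapply Hirr; eauto.
    + eapply Hirr; eauto.
    + eauto.
Qed.

Lemma lex_flip (lt : nat -> nat -> Prop) p q : lex lt p q -> lex (fun a b => lt b a) q p.
Proof. intros [u [a [b [v [w [H1 [H2 H3]]]]]]]. exists u, b, a, w, v; auto. Qed.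

Lemma max_edge d (G : GIFS d) (lt : nat -> nat -> Prop) :
  is_GIFS G ->
  (forall e f h, lt e f -> lt f h -> lt e h) ->
  (forall e f, (e < nE G)%nat -> (f < nE G)%nat -> src G e = src G f -> lt e f \/ e = f \/ lt f e) ->
  forall c, (c < nV G)%nat -> exists m, (m < nE G)%nat /\ src G m = c /\
    forall e, (e < nE G)%nat -> src G e = c -> e = m \/ lt e m.
Proof.
  intros HG Htr Htot c Hc.
  assert (forall N, (N <= nE G)%nat -> (exists e, (e < N)%nat /\ src G e = c) ->
    exists m, (m < N)%nat /\ src G m = c /\ forall e, (e < N)%nat -> src G e = c -> e = m \/ lt e m).
  { induction N; intros HN Hex.
    - destruct Hex as [e [He _]]; lia.
    - destruct (classic (exists e, (e < N)%nat /\ src G e = c)) as [Hx|Hx].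
      + destruct (IHN ltac:(lia) Hx) as [m [Hm [Hsm Hmax]]].
        destruct (Nat.eq_dec (src G N) c) as [HsN|HsN].
        * destruct (Htot N m ltac:(lia) ltac:(lia) ltac:(congruence)) as [H|[H|H]].
          -- exists m. split; [lia|split; auto]. intros e He Hse.
             destruct (Nat.eq_dec e N) as [->|]; auto. apply Hmax; auto; lia.
          -- lia.
          -- exists N. split; [lia|split; auto]. intros e He Hse.
             destruct (Nat.eq_dec e N) as [->|]; auto. right.
             destruct (Hmax e ltac:(lia) Hse) as [->|H']; eauto.
        * exists m. split; [lia|split; auto]. intros e He Hse.
          destruct (Nat.eq_dec e N) as [->|]. congruence. apply Hmax; auto; lia.
      + destruct Hex as [e0 [He0 Hse0]].
        assert (e0 = N). { destruct (Nat.eq_dec e0 N); auto. exfalso; apply Hx; exists e0; split; auto; lia. }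
        subst e0. exists N. split; [lia|split; auto]. intros e He Hse.
        destruct (Nat.eq_dec e N); auto. exfalso; apply Hx; exists e; split; auto; lia. }
  destruct (proj1 (proj2 HG) c Hc) as [e [He Hse]].
  destruct (H (nE G) ltac:(lia)) as [m Hm]; eauto.
Qed.

Fixpoint vert d (G : GIFS d) (mx : nat -> nat) (c n : nat) : nat :=
  match n with 0 => c | S n => tgt G (mx (vert G mx c n)) end.

Lemma highest_exists d (G : GIFS d) (lt : nat -> nat -> Prop) :
  is_GIFS G ->
  (forall e f h, lt e f -> lt f h -> lt e h) ->
  (forall e f, (e < nE G)%nat -> (f < nE G)%nat -> src G e = src G f -> lt e f \/ e = f \/ lt f e) ->
  forall c, (c < nV G)%nat -> exists w, highest_path G lt c w.
Proof.
  intros HG Htr Htot c Hc.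
  destruct (choice_fun (fun c m => (c < nV G)%nat -> (m < nE G)%nat /\ src G m = c /\
    forall e, (e < nE G)%nat -> src G e = c -> e = m \/ lt e m)) as [mx Hmx].
  { intros c'. destruct (lt_dec c' (nV G)) as [Hl|Hl].
    - destruct (@max_edge d G lt HG Htr Htot c' Hl) as [m Hm]. exists m; auto.
    - exists 0%nat; intros; lia. }
  set (w := fun n => mx (vert G mx c n)).
  assert (Hv : forall n, (vert G mx c n < nV G)%nat).
  { induction n; simpl; auto. apply (proj1 HG). apply Hmx; auto. }
  assert (Hf : forall n m, fpath G (vert G mx c m) (map w (seq m n))).
  { induction n; intros m; simpl; auto.
    destruct (Hmx _ (Hv m)) as [H1 [H2 _]]. repeat split; auto. apply (IHn (S m)). }
  assert (Hh : forall n m q, fpath G (vert G mx c m) q -> length q = n ->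
     q = map w (seq m n) \/ lex lt q (map w (seq m n))).
  { induction n; intros m q Hq Hl.
    - destruct q; simpl in *; auto; discriminate.
    - destruct q as [|e q]; simpl in Hl; [discriminate|]. simpl.
      destruct Hq as [He [Hse Hq]].
      destruct (Hmx _ (Hv m)) as [_ [_ Hmax]].
      destruct (Hmax e He Hse) as [Heq|H]; [subst e|].
      + destruct (IHn (S m) q Hq ltac:(lia)) as [->|H].
        * left; reflexivity.
        * right. apply (lex_app [mx (vert G mx c m)] H).
      + right. apply lex_here. exact H. }
  exists w. split.
  - intros n. apply (Hf n 0%nat).
  - intros n q _ [Hq Hl]. apply (Hh n 0%nat q Hq Hl).
Qed.

Lemma lowest_exists d (G : GIFS d) (lt : nat -> nat -> Prop) :
  is_GIFS G ->
  (forall e f h, lt e f -> lt f h -> lt e h) ->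
  (forall e f, (e < nE G)%nat -> (f < nE G)%nat -> src G e = src G f -> lt e f \/ e = f \/ lt f e) ->
  forall c, (c < nV G)%nat -> exists w, lowest_path G lt c w.
Proof.
  intros HG Htr Htot c Hc.
  destruct (@highest_exists d G (fun a b => lt b a) HG) with (c := c) as [w [Hw1 Hw2]]; auto.
  - intros; eauto.
  - intros e f He Hf Hs. destruct (Htot e f He Hf Hs) as [H|[H|H]]; auto.
  - exists w. split; auto. intros n q Hn Hq. destruct (Hw2 n q Hn Hq) as [H|H]; auto.
    right. apply lex_flip in H. exact H.
Qed.

Lemma prefix_split (w : nat -> nat) m n : (m <= n)%nat ->
  prefix w n = prefix w m ++ map w (seq m (n - m)).
Proof.
  intros H. unfold prefix. replace n with (m + (n - m))%nat at 1 by lia.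
  rewrite seq_app, map_app. reflexivity.
Qed.

Lemma length_prefix w n : length (prefix w n) = n.
Proof. unfold prefix. rewrite length_map, length_seq. reflexivity. Qed.

Lemma proj_exists d (G : GIFS d) E : is_GIFS G -> invariant_sets G E ->
  forall c w, (c < nV G)%nat -> ipath G c w -> exists x, proj_point G E c w x.
Proof.
  intros HG HE c w Hc Hw.
  destruct (rmax_ex HG) as [r [Hr Hrg]].
  destruct (choice_fun (fun n z => cyl G E c (prefix w n) z)) as [z Hz].
  { intros n. assert (Ht := @term_lt d G (prefix w n) c HG Hc (Hw n)).
    destruct (proj1 (HE _ Ht)) as [y Hy]. exists (gpath G (prefix w n) y). exists y; auto. }
  destruct (proj1 (proj2 (HE c Hc)) z) as [phi [Hphi [x [Hx Hconv]]]].
  { intros n. apply (cyl_in_E HG HE Hc (Hw n) (Hz n)). }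
  exists x. intros m _.
  set (P := prefix w m). set (t := term G c P).
  assert (Ht : (t < nV G)%nat) by (apply term_lt; auto; apply Hw).
  destruct (choice_fun (fun k y => E t y /\ z (phi (k + m)%nat) = gpath G P y)) as [Y HY].
  { intros k. pose proof (phi_ge phi Hphi (k + m)).
    pose proof (Hz (phi (k + m)%nat)) as Hzk.
    rewrite (prefix_split w (m := m)) in Hzk by lia.
    destruct Hzk as [y [Hy Heq]].
    pose proof (Hw (phi (k+m)%nat)) as Hfp.
    rewrite (prefix_split w (m := m)) in Hfp by lia.
    apply fpath_app in Hfp. destruct Hfp as [_ Hfr].
    exists (gpath G (map w (seq m (phi (k + m) - m)%nat)) y). split.
    - apply (cyl_in_E HG HE Ht Hfr). exists y; split; auto.
      unfold t, P. rewrite <- term_app. exact Hy.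
    - rewrite Heq, gpath_app. reflexivity. }
  destruct (proj1 (proj2 (HE t Ht)) Y) as [psi [Hpsi [ys [Hys Hyc]]]].
  { intros k; apply HY. }
  exists ys. split; auto.
  apply pt_eq. intros i Hi. apply Rminus_diag_uniq. apply zero_small. intros eps Heps.
  destruct (Hconv (eps/2) ltac:(lra)) as [N1 HN1].
  destruct (Hyc (eps/2) ltac:(lra)) as [N2 HN2].
  set (k := Nat.max N1 N2).
  pose proof (phi_ge psi Hpsi k).
  specialize (HN2 k ltac:(lia)).
  specialize (HN1 (psi k + m)%nat ltac:(lia)).
  destruct (HY (psi k)) as [_ HYk]. rewrite HYk in HN1.
  assert (Hl := gpath_lip G (proj1 Hr) Hrg P (Y (psi k)) ys (@fpath_edges d G P c (Hw m))).
  pose proof (pow_01 (length P) (conj (proj1 Hr) (Rlt_le _ _ (proj2 Hr)))).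
  pose proof (dist_nonneg (Y (psi k)) ys).
  pose proof (coord_le_dist (gpath G P (Y (psi k))) x Hi).
  pose proof (coord_le_dist (gpath G P (Y (psi k))) (gpath G P ys) Hi).
  pose proof (abs_tri3 (coord x i) (coord (gpath G P ys) i) (coord (gpath G P (Y (psi k))) i)).
  assert (r ^ length P * dist (Y (psi k)) ys <= dist (Y (psi k)) ys) by nra.
  lra.
Qed.

Lemma tail_exists d (G : GIFS d) lt E : is_GIFS G -> is_ordered G lt -> invariant_sets G E ->
  forall c, (c < nV G)%nat -> exists x, is_tail G lt E c x.
Proof.
  intros HG [_ [_ [Htr [Htot _]]]] HE c Hc.
  destruct (@highest_exists d G lt HG Htr Htot c Hc) as [w Hw].
  destruct (proj_exists HG HE Hc (proj1 Hw)) as [x Hx].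
  exists x, w; auto.
Qed.

Lemma head_exists d (G : GIFS d) lt E : is_GIFS G -> is_ordered G lt -> invariant_sets G E ->
  forall c, (c < nV G)%nat -> exists x, is_head G lt E c x.
Proof.
  intros HG [_ [_ [Htr [Htot _]]]] HE c Hc.
  destruct (@lowest_exists d G lt HG Htr Htot c Hc) as [w Hw].
  destruct (proj_exists HG HE Hc (proj1 Hw)) as [x Hx].
  exists x, w; auto.
Qed.

Lemma proj_in_E d (G : GIFS d) E : is_GIFS G -> invariant_sets G E ->
  forall c w x, (c < nV G)%nat -> ipath G c w -> proj_point G E c w x -> E c x.
Proof.
  intros HG HE c w x Hc Hw Hx.
  apply (cyl_in_E HG HE Hc (Hw 1%nat) (Hx 1%nat ltac:(lia))).
Qed.

Lemma chain_to_linear d (G : GIFS d) lt E : is_GIFS G -> is_ordered G lt -> invariant_sets G E ->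
  chain_condition G lt E -> linear_GIFS G lt E.
Proof.
  intros HG HO HE Hch i k p q Hi Hk [[Hp Hpl] [[Hq Hql] [Hlex Hno]]].
  destruct Hlex as [u [a [b [v [w [-> [-> Hab]]]]]]].
  apply fpath_app in Hp; destruct Hp as [Hu [Ha [Hsa Hv]]].
  apply fpath_app in Hq; destruct Hq as [_ [Hb [Hsb Hw]]].
  set (j := term G i u) in *.
  assert (Hj : (j < nV G)%nat) by (apply term_lt; auto).
  assert (Hta : (tgt G a < nV G)%nat) by (apply (proj1 HG); auto).
  assert (Htb : (tgt G b < nV G)%nat) by (apply (proj1 HG); auto).
  rewrite length_app in Hpl, Hql. simpl in Hpl, Hql.
  assert (Hadj : adjacent_edges G lt j a b).
  { repeat split; auto. intros [h [Hh [Hsh [Hah Hhb]]]].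
    assert (Hth : (tgt G h < nV G)%nat) by (apply (proj1 HG); auto).
    destruct (path_exists HG (length v) Hth) as [z [Hz Hzl]].
    apply Hno. exists (u ++ h :: z). repeat split.
    - apply fpath_app; split; auto. simpl; auto.
    - rewrite length_app; simpl; lia.
    - exists u, a, h, v, z; auto.
    - exists u, h, b, z, w; auto. }
  destruct (tail_exists HG HO HE Hta) as [x [w1 [Hw1 Hx]]].
  destruct (head_exists HG HO HE Htb) as [y [w2 [Hw2 Hy]]].
  pose proof (Hch j a b Hj Hadj x y (ex_intro _ w1 (conj Hw1 Hx)) (ex_intro _ w2 (conj Hw2 Hy))) as Heq.
  assert (Hxc : cyl G E (tgt G a) v x).
  { destruct (length v) as [|m] eqn:Hm.
    - destruct v; [|discriminate]. exists x; split; auto.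
      apply (proj_in_E HG HE Hta (proj1 Hw1) Hx).
    - destruct (proj2 Hw1 (S m) v ltac:(lia) (conj Hv Hm)) as [->|Hl].
      + apply Hx; lia.
      + exfalso. apply Hno. exists (u ++ a :: prefix w1 (S m)). repeat split.
        * apply fpath_app; split; auto. split; [auto|split; [auto|apply (proj1 Hw1)]].
        * rewrite length_app; change (length (?x :: ?l)) with (S (length l)); rewrite length_prefix; lia.
        * apply lex_app. apply (lex_app [a] Hl).
        * exists u, a, b, (prefix w1 (S m)), w; auto. }
  assert (Hyc : cyl G E (tgt G b) w y).
  { destruct (length w) as [|m] eqn:Hm.
    - destruct w; [|discriminate]. exists y; split; auto.
      apply (proj_in_E HG HE Htb (proj1 Hw2) Hy).
    - destruct (proj2 Hw2 (S m) w ltac:(lia) (conj Hw Hm)) as [->|Hl].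
      + apply Hy; lia.
      + exfalso. apply Hno. exists (u ++ b :: prefix w2 (S m)). repeat split.
        * apply fpath_app; split; auto. split; [auto|split; [auto|apply (proj1 Hw2)]].
        * rewrite length_app; change (length (?x :: ?l)) with (S (length l)); rewrite length_prefix; lia.
        * exists u, a, b, v, (prefix w2 (S m)); auto.
        * apply lex_app. apply (lex_app [b] Hl). }
  exists (gpath G u (gmap G a x)). split.
  - destruct Hxc as [y1 [Hy1 ->]]. exists y1. split.
    + rewrite term_app. exact Hy1.
    + rewrite gpath_app. reflexivity.
  - rewrite Heq. destruct Hyc as [y1 [Hy1 ->]]. exists y1. split.
    + rewrite term_app. exact Hy1.
    + rewrite gpath_app. reflexivity.
Qed.

Lemma linear_to_chain d (G : GIFS d) lt E : is_GIFS G -> is_ordered G lt -> invariant_sets G E ->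
  linear_GIFS G lt E -> chain_condition G lt E.
Proof.
  intros HG HO HE Hlin i e f Hi Hadj x y [w1 [Hw1 Hx]] [w2 [Hw2 Hy]].
  destruct HO as [_ [Hirr [Htr _]]].
  pose proof Hadj as [He [Hf [Hse [Hsf [Hef Hno]]]]].
  assert (Hte : (tgt G e < nV G)%nat) by (apply (proj1 HG); auto).
  assert (Htf : (tgt G f < nV G)%nat) by (apply (proj1 HG); auto).
  destruct (rmax_ex HG) as [r [Hr Hrg]].
  destruct (uniform_bound HE) as [M HM].
  apply pt_eq. intros c Hc. apply Rminus_diag_uniq. apply zero_small. intros eps Heps.
  set (K := 2 * (Rabs M + 1)).
  assert (HK : 0 < K) by (unfold K; pose proof (Rabs_pos M); lra).
  destruct (pow_lt_1_zero r ltac:(rewrite Rabs_right; lra) (eps / K) ltac:(apply Rdiv_lt_0_compat; lra)) as [N HN].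
  set (n := S N).
  set (P := e :: prefix w1 n). set (Q := f :: prefix w2 n).
  assert (HP : paths G i (S n) P).
  { split. split; [auto|split; [auto|apply (proj1 Hw1)]].
    unfold P. change (length (?x :: ?l)) with (S (length l)). rewrite length_prefix; auto. }
  assert (HQ : paths G i (S n) Q).
  { split. split; [auto|split; [auto|apply (proj1 Hw2)]].
    unfold Q. change (length (?x :: ?l)) with (S (length l)). rewrite length_prefix; auto. }
  assert (HPQ : adjacent_paths G lt i (S n) P Q).
  { repeat split; try apply HP; try apply HQ.
    - apply lex_here; auto.
    - intros [rr [[Hr1 Hr2] [H1 H2]]].
      destruct rr as [|h r']. eapply lex_nil_r; eauto.
      destruct Hr1 as [Hh [Hsh Hr']]. simpl in Hr2. injection Hr2 as Hr2.
      apply lex_cons_inv in H1. apply lex_cons_inv in H2.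
      destruct H1 as [H1|[<- H1]]; destruct H2 as [H2|[Hhf H2]].
      + apply Hno. exists h; auto.
      + subst h. destruct (proj2 Hw2 n r' ltac:(unfold n; lia) (conj Hr' Hr2)) as [->|H3].
        * eapply lex_asym; eauto.
        * eapply lex_asym; eauto.
      + destruct (proj2 Hw1 n r' ltac:(unfold n; lia) (conj Hr' Hr2)) as [->|H3].
        * eapply lex_asym; eauto.
        * eapply lex_asym; eauto.
      + subst. eapply Hirr; eauto. }
  destruct (Hlin i (S n) P Q Hi ltac:(lia) HPQ) as [z [Hz1 Hz2]].
  destruct Hz1 as [y1 [Hy1 Hz1]]. destruct Hz2 as [y2 [Hy2 Hz2]].
  destruct (Hx n ltac:(unfold n; lia)) as [y1' [Hy1' Hx']].
  destruct (Hy n ltac:(unfold n; lia)) as [y2' [Hy2' Hy']].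
  assert (HA : gmap G e x = gpath G P y1') by (rewrite Hx'; reflexivity).
  assert (HB : gmap G f y = gpath G Q y2') by (rewrite Hy'; reflexivity).
  assert (Hlp : length P = S n) by apply HP.
  assert (Hlq : length Q = S n) by apply HQ.
  pose proof (gpath_lip G (proj1 Hr) Hrg P y1 y1' (@fpath_edges d G P i (proj1 HP))) as L1.
  pose proof (gpath_lip G (proj1 Hr) Hrg Q y2 y2' (@fpath_edges d G Q i (proj1 HQ))) as L2.
  rewrite Hlp in L1. rewrite Hlq in L2.
  assert (Ht1 : (term G i P < nV G)%nat) by (apply term_lt; auto; apply HP).
  assert (Ht2 : (term G i Q < nV G)%nat) by (apply term_lt; auto; apply HQ).
  assert (D1 : dist y1 y1' <= M) by (apply (HM _ _ _ Ht1); auto).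
  assert (D2 : dist y2 y2' <= M) by (apply (HM _ _ _ Ht2); auto).
  pose proof (coord_le_dist (gpath G P y1) (gpath G P y1') Hc) as C1.
  pose proof (coord_le_dist (gpath G Q y2) (gpath G Q y2') Hc) as C2.
  rewrite <- Hz1, <- HA in C1, L1. rewrite <- Hz2, <- HB in C2, L2.
  pose proof (abs_tri3 (coord (gmap G e x) c) (coord (gmap G f y) c) (coord z c)) as T.
  specialize (HN (S n) ltac:(unfold n; lia)).
  pose proof (pow_01 (S n) (conj (proj1 Hr) (Rlt_le _ _ (proj2 Hr)))) as Hp01.
  rewrite Rabs_right in HN by lra.
  assert (Hd1 := dist_nonneg y1 y1'). assert (Hd2 := dist_nonneg y2 y2').
  assert (HMa : M <= Rabs M + 1) by (pose proof (Rle_abs M); lra).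
  assert (HrK : r ^ S n * K < eps).
  { apply (Rmult_lt_compat_r K) in HN; auto. unfold Rdiv in HN.
    rewrite Rmult_assoc, Rinv_l, Rmult_1_r in HN; lra. }
  unfold K in HrK.
  assert (r ^ S n * dist y1 y1' <= r ^ S n * (Rabs M + 1)) by (apply Rmult_le_compat_l; lra).
  assert (r ^ S n * dist y2 y2' <= r ^ S n * (Rabs M + 1)) by (apply Rmult_le_compat_l; lra).
  lra.
Qed.

Theorem theorem1p2 (d : nat) (G : GIFS d) (lt : nat -> nat -> Prop)
  (E : nat -> pt d -> Prop) :
  is_GIFS G -> is_ordered G lt -> invariant_sets G E ->
  (linear_GIFS G lt E <-> chain_condition G lt E).
Proof.
  intros HG HO HE. split.
  - apply linear_to_chain; auto.
  - apply chain_to_linear; auto.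
Qed.
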